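(* Fix $n\geq 3$ and let $r>0$. Then $T^{\circ r}$ is positive definite for every positive definite matrix $T$ of the form below if and only if $r\geq 1$; likewise, $T^{\circ r}$ is positive semidefinite for every positive semidefinite matrix $T$ of the form below if and only if $r\geq 1$. Here $T$ ranges over the $n\times n$ symmetric tridiagonal matrices with diagonal entries $T_{ii}=a_i\geq 0$ ($1\le i\le n$), off-diagonal entries $T_{j,j+1}=T_{j+1,j}=b_j\geq 0$ ($1\le j\le n-1$), and all other entries zero.
   Context: For a nonnegative matrix $A=[a_{ij}]$ and $r>0$, the Hadamard power is $A^{\circ r}=[a_{ij}^r]$. Positive (semi)definite matrices are required to be symmetric. *)

(* Defs.v *)
From HB Require Import structures.
From mathcomp Require Import all_boot all_order all_algebra.
From mathcomp Require Import all_classical all_reals.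
From mathcomp Require Import exp.
Set Implicit Arguments. Unset Strict Implicit. Unset Printing Implicit Defensive.
Import Order.TTheory GRing.Theory Num.Theory.
Local Open Scope ring_scope.

Definition qform (R : realType) (n : nat) (A : 'M[R]_n) (x : 'rV[R]_n) : R :=
  (x *m A *m x^T) 0 0.

Definition posdef (R : realType) (n : nat) (A : 'M[R]_n) : Prop :=
  A^T = A /\ forall x : 'rV[R]_n, x != 0 -> 0 < qform A x.

Definition possemidef (R : realType) (n : nat) (A : 'M[R]_n) : Prop :=
  A^T = A /\ forall x : 'rV[R]_n, 0 <= qform A x.

(* Hadamard (entrywise) real power; powR with 0 `^ r = 0 for r > 0 *)
Definition hadamard_pow (R : realType) (n : nat) (r : R) (A : 'M[R]_n) : 'M[R]_n :=
  \matrix_(i, j) (A i j `^ r).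

Definition nonneg_tridiag (R : realType) (n : nat) (T : 'M[R]_n) : Prop :=
  (forall i j : 'I_n, T i j = T j i) /\
  (forall i : 'I_n, 0 <= T i i) /\
  (forall i j : 'I_n, j = i.+1 :> nat -> 0 <= T i j) /\
  (forall i j : 'I_n, (i.+1 < j)%N \/ (j.+1 < i)%N -> T i j = 0).

(* Main.v *)
Require Import Defs.
From HB Require Import structures.
From mathcomp Require Import all_boot all_order all_algebra.
From mathcomp Require Import all_classical all_reals.
From mathcomp Require Import sequences exp.
From mathcomp Require Import ring lra.
Import Order.TTheory GRing.Theory Num.Theory.
Local Open Scope ring_scope.

Definition sh (R : realType) (f : nat -> R) := fun i => f i.+1.
Definition upd (R : realType) (f : nat -> R) (v : R) :=
  fun i => if i is 0%N then v else f i.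
Definition cns (R : realType) (t : R) (f : nat -> R) :=
  fun i => if i is i'.+1 then f i' else t.
Fixpoint Qf (R : realType) (m : nat) (a b X : nat -> R) : R :=
  match m with
  | 0%N => a 0%N * X 0%N ^+ 2
  | m'.+1 => a 0%N * X 0%N ^+ 2 + 2 * b 0%N * X 0%N * X 1%N
             + Qf R m' (sh R a) (sh R b) (sh R X)
  end.
Arguments Qf {R}.
Arguments sh {R}.
Arguments upd {R}.
Arguments cns {R}.

Lemma Qf_upd (R : realType) m (a b X : nat -> R) v :
  Qf m a b X = Qf m (upd a v) b X + (a 0%N - v) * X 0%N ^+ 2.
Proof. case: m => [|m] /=; rewrite /upd /=; ring. Qed.

Lemma Qf_zero (R : realType) m (a b X : nat -> R) :
  (forall i, (i <= m)%N -> X i = 0) -> Qf m a b X = 0.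
Proof.
elim: m a b X => [|m IH] a b X H /=; first by rewrite H // expr0n mulr0.
rewrite IH; last by move=> i hi; apply: H.
rewrite !H // expr0n /=; ring.
Qed.

Lemma Qf_cns (R : realType) m (a b Y : nat -> R) t :
  Qf m.+1 a b (cns t Y) = a 0%N * t ^+ 2 + 2 * b 0%N * t * Y 0%N + Qf m (sh a) (sh b) Y.
Proof. by []. Qed.

Definition d0 (R : realType) : nat -> R := cns 1 (fun=> 0).
Arguments d0 {R}.

Lemma Qf_d0 (R : realType) m (a b : nat -> R) : Qf m a b d0 = a 0%N.
Proof.
case: m => [|m] /=; first by rewrite expr1n mulr1.
rewrite Qf_zero // /d0 /=; rewrite expr1n; ring.
Qed.

Lemma powR_superadd (R : realType) (x y r : R) : 0 <= x -> 0 <= y -> 1 <= r ->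
  x `^ r + y `^ r <= (x + y) `^ r.
Proof.
move=> x0 y0 r1; have r0 : r != 0 by rewrite gt_eqF // (lt_le_trans _ r1).
have [->|xp] := eqVneq x 0; first by rewrite powR0 // !add0r.
have [->|yp] := eqVneq y 0; first by rewrite powR0 // !addr0.
have xp' : 0 < x by rewrite lt_neqAle eq_sym xp.
have yp' : 0 < y by rewrite lt_neqAle eq_sym yp.
set s := x + y.
have sp : 0 < s by rewrite /s addr_gt0.
have ex : x = (x / s) * s by rewrite divfK // gt_eqF.
have ey : y = (y / s) * s by rewrite divfK // gt_eqF.
have h1 : x `^ r <= (x / s) * s `^ r.
  rewrite {1}ex; apply: ge1r_powRZ => //; last exact: ltW.
  rewrite divr_gt0 //= ler_pdivrMr // mul1r /s lerDl //.
have h2 : y `^ r <= (y / s) * s `^ r.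
  rewrite {1}ey; apply: ge1r_powRZ => //; last exact: ltW.
  rewrite divr_gt0 //= ler_pdivrMr // mul1r /s lerDr //.
have -> : s `^ r = (x / s) * s `^ r + (y / s) * s `^ r.
  by rewrite -mulrDl -mulrDl divff ?mul1r // gt_eqF.
exact: lerD.
Qed.

Definition pw (R : realType) (r : R) (f : nat -> R) := fun i => f i `^ r.
Arguments pw {R}.

Lemma key_ineq (R : realType) (A B d e x y : R) :
  0 < A -> A * d = B * B -> d <= e -> 0 <= A * x ^+ 2 + 2 * B * x * y + e * y ^+ 2.
Proof.
move=> A0 AdB de.
have h : 0 <= A * (A * x ^+ 2 + 2 * B * x * y + d * y ^+ 2).
  have -> : A * (A * x ^+ 2 + 2 * B * x * y + d * y ^+ 2) =
     (A * x + B * y) ^+ 2 + (A * d - B * B) * y ^+ 2 by ring.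
  by rewrite AdB subrr mul0r addr0 sqr_ge0.
have h2 : 0 <= A * x ^+ 2 + 2 * B * x * y + d * y ^+ 2.
  by rewrite -(pmulr_rge0 _ A0).
apply: (le_trans h2); rewrite lerD2l; apply: ler_wpM2r => //; exact: sqr_ge0.
Qed.

Lemma step_eq (R : realType) m (a b Y : nat -> R) :
  a 0%N != 0 ->
  Qf m (upd (sh a) (a 1%N - b 0%N ^+ 2 / a 0%N)) (sh b) Y =
  Qf m.+1 a b (cns (- (b 0%N * Y 0%N) / a 0%N) Y).
Proof.
move=> a0; rewrite Qf_cns (@Qf_upd R m (sh a) (sh b) Y (a 1%N - b 0%N ^+ 2 / a 0%N)) /sh /=.
field => //.
Qed.

Lemma pow_rel (R : realType) (r a0 b0 : R) : 0 < a0 -> 0 <= b0 ->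
  a0 `^ r * (b0 ^+ 2 / a0) `^ r = b0 `^ r * b0 `^ r.
Proof.
move=> a0p b0p.
rewrite -powRM; last by rewrite divr_ge0 ?sqr_ge0 ?ltW.
2: exact: ltW.
have -> : a0 * (b0 ^+ 2 / a0) = b0 * b0 by field; rewrite gt_eqF.
by rewrite powRM.
Qed.

Lemma psd_pow (R : realType) (r : R) (m : nat) : 1 <= r ->
  forall a b : nat -> R, (forall i, 0 <= a i) -> (forall i, 0 <= b i) ->
  (forall X, 0 <= Qf m a b X) -> forall X, 0 <= Qf m (pw r a) (pw r b) X.
Proof.
move=> r1; have r0 : r != 0 by rewrite gt_eqF // (lt_le_trans _ r1).
elim: m => [|m IH] a b a0 b0 H X.
  by rewrite /= mulr_ge0 ?powR_ge0 ?sqr_ge0.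
have [a00|a0p] := eqVneq (a 0%N) 0.
  have b00 : b 0%N = 0.
    apply/eqP; apply/negPn/negP => bn0.
    have bp : 0 < b 0%N by rewrite lt_neqAle eq_sym bn0 b0.
    have := H (cns (- (a 1%N + 1) / (2 * b 0%N)) d0).
    rewrite Qf_cns Qf_d0 /d0 /cns /sh /= a00 mul0r add0r mulr1.
    have -> : 2 * b 0%N * (- (a 1%N + 1) / (2 * b 0%N)) = - (a 1%N + 1).
      by field; rewrite gt_eqF.
    move=> h; lra.
  rewrite /= {1 2}/pw a00 b00 !powR0 // !mul0r mulr0 !add0r.
  have H' : forall Y, 0 <= Qf m (sh a) (sh b) Y.
    move=> Y; have := H (cns 0 Y); rewrite Qf_cns a00 b00 => h; lra.
  have := IH (sh a) (sh b) (fun i => a0 i.+1) (fun i => b0 i.+1) H' (sh X); by rewrite !mul0r add0r.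
have a0p' : 0 < a 0%N by rewrite lt_neqAle eq_sym a0p a0.
set c := a 1%N - b 0%N ^+ 2 / a 0%N.
have H' : forall Y, 0 <= Qf m (upd (sh a) c) (sh b) Y by move=> Y; rewrite step_eq.
have c0 : 0 <= c by have := H' d0; rewrite Qf_d0.
have hu : forall i, 0 <= upd (sh a) c i by case=> [|i] //=; exact: a0.
have IH' := IH _ _ hu (fun i => b0 i.+1) H' (sh X).
rewrite /= (@Qf_upd R m (sh (pw r a)) (sh (pw r b)) (sh X) (c `^ r)).
have -> : upd (sh (pw r a)) (c `^ r) = pw r (upd (sh a) c) by apply: funext; case.
have -> : sh (pw r b) = pw r (sh b) by [].
set Q := Qf m _ _ _ in IH' *.
have d0' : 0 <= b 0%N ^+ 2 / a 0%N by rewrite divr_ge0 ?sqr_ge0 ?ltW.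
have de : (b 0%N ^+ 2 / a 0%N) `^ r <= a 1%N `^ r - c `^ r.
  have := @powR_superadd R _ _ r d0' c0 r1.
  have -> : b 0%N ^+ 2 / a 0%N + c = a 1%N by rewrite /c; ring.
  move=> h; lra.
have K := @key_ineq R _ _ _ _ (X 0%N) (X 1%N) (powR_gt0 r a0p') (@pow_rel R r _ _ a0p' (b0 0%N)) de.
rewrite /pw /sh /=.
set e := a 1%N `^ r - c `^ r in K *.
set A := a 0%N `^ r in K *.
set B := b 0%N `^ r in K *.
set P := A * X 0%N ^+ 2 + 2 * B * X 0%N * X 1%N in K *.
have -> : P + (Q + e * X 1%N ^+ 2) = (P + e * X 1%N ^+ 2) + Q by ring.
exact: addr_ge0.
Qed.

Lemma pd_pow (R : realType) (r : R) (m : nat) : 1 <= r ->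
  forall a b : nat -> R, (forall i, 0 <= a i) -> (forall i, 0 <= b i) ->
  (forall X, (exists i, (i <= m)%N /\ X i != 0) -> 0 < Qf m a b X) ->
  forall X, (exists i, (i <= m)%N /\ X i != 0) -> 0 < Qf m (pw r a) (pw r b) X.
Proof.
move=> r1; have r0 : r != 0 by rewrite gt_eqF // (lt_le_trans _ r1).
elim: m => [|m IH] a b a0 b0 H X [i [hi Xi]].
  have a0p : 0 < a 0%N.
    by have := H d0 (ex_intro _ 0%N (conj (leq0n _) (oner_neq0 R))); rewrite Qf_d0.
  move: hi; rewrite leqn0 => /eqP ei; subst i.
  by rewrite /= mulr_gt0 ?powR_gt0 // lt_def sqrf_eq0 Xi sqr_ge0.
have a0p' : 0 < a 0%N.
  by have := H d0 (ex_intro _ 0%N (conj (leq0n _) (oner_neq0 R))); rewrite Qf_d0.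
set c := a 1%N - b 0%N ^+ 2 / a 0%N.
have H' : forall Y, (exists j, (j <= m)%N /\ Y j != 0) -> 0 < Qf m (upd (sh a) c) (sh b) Y.
  move=> Y [j [hj Yj]]; rewrite step_eq ?gt_eqF //; apply: H.
  by exists j.+1; split.
have c0 : 0 < c.
  by have := H' d0 (ex_intro _ 0%N (conj (leq0n _) (oner_neq0 R))); rewrite Qf_d0.
have hu : forall i, 0 <= upd (sh a) c i by case=> [|k] //=; [exact: ltW | exact: a0].
have IH' := IH _ _ hu (fun i => b0 i.+1) H'.
rewrite /= (@Qf_upd R m (sh (pw r a)) (sh (pw r b)) (sh X) (c `^ r)).
have -> : upd (sh (pw r a)) (c `^ r) = pw r (upd (sh a) c) by apply: funext; case.
have -> : sh (pw r b) = pw r (sh b) by [].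
set Q := Qf m _ _ _ in IH' *.
have d0' : 0 <= b 0%N ^+ 2 / a 0%N by rewrite divr_ge0 ?sqr_ge0 ?ltW.
have de : (b 0%N ^+ 2 / a 0%N) `^ r <= a 1%N `^ r - c `^ r.
  have := @powR_superadd R _ _ r d0' (ltW c0) r1.
  have -> : b 0%N ^+ 2 / a 0%N + c = a 1%N by rewrite /c; ring.
  move=> h; lra.
have K := @key_ineq R _ _ _ _ (X 0%N) (X 1%N) (powR_gt0 r a0p') (@pow_rel R r _ _ a0p' (b0 0%N)) de.
rewrite /pw /sh /=.
set e := a 1%N `^ r - c `^ r in K *.
set A := a 0%N `^ r in K *.
set B := b 0%N `^ r in K *.
set P := A * X 0%N ^+ 2 + 2 * B * X 0%N * X 1%N in K *.
have -> : P + (Q + e * X 1%N ^+ 2) = (P + e * X 1%N ^+ 2) + Q by ring.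
case: (pselect (exists j, (j <= m)%N /\ sh X j != 0)) => [hex|hnex].
  by apply: ltr_wpDl => //; apply: IH'.
have hz : forall j, (j <= m)%N -> sh X j = 0.
  move=> j hj; apply/eqP; apply/negPn/negP => hn; apply: hnex; by exists j.
have -> : Q = 0 by rewrite /Q Qf_zero.
have X1 : X 1%N = 0 by apply: (hz 0%N).
case: i hi Xi => [|i] hi Xi; last by move: Xi; have := hz i hi; rewrite /sh => ->; rewrite eqxx.
rewrite addr0 /P X1 expr0n /= !mulr0 !addr0.
by rewrite mulr_gt0 ?powR_gt0 // lt_def sqrf_eq0 Xi sqr_ge0.
Qed.

Definition Qs (R : realType) m (a b X : nat -> R) :=
  \sum_(0 <= i < m.+1) a i * X i ^+ 2 + 2 * \sum_(0 <= i < m) b i * X i * X i.+1.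
Arguments Qs {R}.

Lemma Qf_Qs (R : realType) m (a b X : nat -> R) : Qf m a b X = Qs m a b X.
Proof.
elim: m a b X => [|m IH] a b X.
  by rewrite /Qs /= big_nat1 big_geq // mulr0 addr0.
rewrite /= IH /Qs (@big_nat_recl _ _ _ m.+1 0 (fun i => a i * X i ^+2)) //.
rewrite (@big_nat_recl _ _ _ m 0 (fun i => b i * X i * X i.+1)) //.
rewrite /sh; ring.
Qed.

Lemma sum_ifeq (R : realType) n k (f : nat -> R) :
  \sum_(0 <= i < n) (if i == k then f i else 0) = if (k < n)%N then f k else 0.
Proof.
elim: n => [|n IH]; first by rewrite big_geq.
rewrite big_nat_recr //= IH.
case: (ltngtP k n) => hk.
- by rewrite (ltn_trans hk (ltnSn n)) addr0.
- by rewrite ltnNge hk addr0.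
- by rewrite hk ltnSn add0r.
Qed.

Lemma tri_sum (R : realType) m (t : nat -> nat -> R) (X : nat -> R) :
  (forall i j, t i j = t j i) ->
  (forall i j, (i < m.+1)%N -> (j < m.+1)%N -> (i.+1 < j)%N || (j.+1 < i)%N -> t i j = 0) ->
  \sum_(0 <= j < m.+1) \sum_(0 <= i < m.+1) X i * t i j * X j
   = Qs m (fun i => t i i) (fun i => t i i.+1) X.
Proof.
move=> ts tz.
have row : forall j, (j < m.+1)%N ->
   \sum_(0 <= i < m.+1) X i * t i j * X j =
   t j j * X j ^+ 2 + (if (j.+1 < m.+1)%N then t j j.+1 * X j * X j.+1 else 0)
   + (if j is j'.+1 then t j' j'.+1 * X j' * X j'.+1 else 0).
  move=> j hj.
  rewrite (@eq_big_nat _ _ _ 0 m.+1 _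
     (fun i => (if i == j then X j * t j j * X j else 0)
             + (if i == j.+1 then X j.+1 * t j.+1 j * X j else 0)
             + (if i.+1 == j then X i * t i j * X j else 0))); last first.
    move=> i /andP[_ hi].
    case: (ltngtP i j) => hij.
    + rewrite (ltn_eqF (ltn_trans hij (ltnSn j))) !add0r.
      case: eqP => // hne.
      rewrite tz ?mulr0 ?mul0r //; apply/orP; left.
      by rewrite ltn_neqAle hij andbT; apply/eqP.
    + rewrite add0r.
      have -> : (i.+1 == j) = false by apply/negbTE; rewrite neq_ltn ltnS (ltnW hij) orbT.
      rewrite addr0; case: eqP => [->//|hne].
      rewrite tz ?mulr0 ?mul0r //; apply/orP; right.
      by rewrite ltn_neqAle hij andbT eq_sym; apply/eqP.
    + subst i.
      have -> : (j == j.+1) = false by apply/negbTE; rewrite neq_ltn ltnSn.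
      have -> : (j.+1 == j) = false by apply/negbTE; rewrite neq_ltn ltnSn orbT.
      by rewrite !addr0.
  rewrite !big_split /= !sum_ifeq hj.
  case: j hj => [|j] hj.
    rewrite big1 => [|i _]; last by [].
    rewrite addr0 (ts 1%N 0%N); case: ifP => _; ring.
  rewrite (@eq_big_nat _ _ _ 0 m.+1 _ (fun i => if i == j then X j * t j j.+1 * X j.+1 else 0)); last first.
    by move=> i _; rewrite eqSS; case: eqP => [->|].
  rewrite sum_ifeq (ltn_trans (ltnSn j) hj).
  rewrite (ts j.+2 j.+1); case: ifP => _; ring.
rewrite (@eq_big_nat _ _ _ 0 m.+1 _ _ (fun j hj => row j (andP hj).2)).
rewrite !big_split /= /Qs.
rewrite [X in _ + X + _ = _]big_nat_recr //= ltnn addr0.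
rewrite [X in _ + _ + X = _]big_nat_recl //= add0r.
rewrite [X in _ + X + _ = _](@eq_big_nat _ _ _ 0 m _ (fun j => t j j.+1 * X j * X j.+1)); last first.
  by move=> i /andP[_ hi]; rewrite ltnS hi.
ring.
Qed.

Lemma cex_beta (R : realType) (r : R) : 0 < r -> r < 1 ->
  exists beta : R, 0 <= beta /\ 2 * beta ^+ 2 < 1 /\ 1 < 2 * (beta `^ r) ^+ 2.
Proof.
move=> r0 r1.
set L : R := ln 2.
have L0 : 0 < L by apply: ln_gt0; lra.
have e2 : expR L = 2 by rewrite /L lnK // posrE; lra.
set s := (r + 1) / (4 * r).
have hs : s * r = (r + 1) / 4 by rewrite /s; field; rewrite gt_eqF.
have s2 : 1 < 2 * s by nra.
exists (expR (- (s * L))); split; first exact: ltW (expR_gt0 _).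
split.
  rewrite -e2 expr2 -!expRD -expR0 ltr_expR.
  have := mulr_gt0 L0 (_ : 0 < 2 * s - 1); nra.
rewrite /powR gt_eqF ?expR_gt0 // expRK.
rewrite -e2 expr2 -!expRD -expR0 ltr_expR.
have : r * - (s * L) + r * - (s * L) = - (2 * (s * r) * L) by ring.
rewrite hs => ->.
nra.
Qed.

Lemma qform_tri (R : realType) m (M : 'M[R]_m.+1) (x : 'rV[R]_m.+1) :
  (forall i j : 'I_m.+1, M i j = M j i) ->
  (forall i j : 'I_m.+1, (i.+1 < j)%N \/ (j.+1 < i)%N -> M i j = 0) ->
  qform M x = Qf m (fun i => M (inord i) (inord i)) (fun i => M (inord i) (inord i.+1))
                 (fun i => x 0 (inord i)).
Proof.
move=> Ms Mz.
rewrite Qf_Qs -(@tri_sum R m (fun i j => M (inord i) (inord j)) (fun i => x 0 (inord i))); last 2 first.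
- by move=> i j; rewrite Ms.
- move=> i j hi hj /orP h; apply: Mz; rewrite !inordK //.
rewrite /qform !mxE big_mkord; apply: eq_bigr => j _.
rewrite !mxE big_distrl big_mkord /=; apply: eq_bigr => i _.
by rewrite !inord_val.
Qed.

Lemma Qf_ext (R : realType) m (a b X a' b' X' : nat -> R) :
  (forall i, (i <= m)%N -> a i = a' i) -> (forall i, (i < m)%N -> b i = b' i) ->
  (forall i, (i <= m)%N -> X i = X' i) -> Qf m a b X = Qf m a' b' X'.
Proof.
elim: m a b X a' b' X' => [|m IH] a b X a' b' X' ha hb hX /=.
  by rewrite ha // hX.
rewrite ha // hb // !hX // (IH (sh a) (sh b) (sh X) (sh a') (sh b') (sh X')) //.
- by move=> i hi; apply: ha.
- by move=> i hi; apply: hb.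
- by move=> i hi; apply: hX.
Qed.

Lemma rv_nz (R : realType) n (x : 'rV[R]_n) : x != 0 -> exists j, x 0 j != 0.
Proof.
move=> hx; case: (pselect (exists j, x 0 j != 0)) => // hn.
exfalso; move/eqP: hx; apply; apply/rowP => j; rewrite mxE.
by apply/eqP; apply/negPn/negP => hj; apply: hn; exists j.
Qed.

Lemma suff_both (R : realType) (r : R) m (T : 'M[R]_m.+1) : 1 <= r -> nonneg_tridiag T ->
  (possemidef T -> possemidef (hadamard_pow r T)) /\
  (posdef T -> posdef (hadamard_pow r T)).
Proof.
move=> r1 [Ts [Td [Ta Tz]]].
have r0 : r != 0 by rewrite gt_eqF // (lt_le_trans _ r1).
set a := fun i => T (inord i) (inord i).
set b := fun i : nat => if (i < m)%N then T (inord i) (inord i.+1) else 0.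
have a0 : forall i, 0 <= a i by move=> i; apply: Td.
have b0 : forall i, 0 <= b i.
  move=> i; rewrite /b; case: ifP => hi //; apply: Ta.
  by rewrite !inordK // ltnS ?(ltnW hi) // ltnW.
have QT : forall x, qform T x = Qf m a b (fun i => x 0 (inord i)).
  move=> x; rewrite qform_tri //; apply: Qf_ext => // i hi.
  by rewrite /b hi.
have QX : forall X, Qf m a b X = qform T (\row_(j < m.+1) X j).
  move=> X; rewrite QT; apply: Qf_ext => // i hi.
  by rewrite mxE inordK.
have Hs : (hadamard_pow r T)^T = hadamard_pow r T.
  by apply/matrixP => i j; rewrite !mxE Ts.
have QH : forall x, qform (hadamard_pow r T) x = Qf m (pw r a) (pw r b) (fun i => x 0 (inord i)).
  move=> x; rewrite qform_tri.
  - apply: Qf_ext => //.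
    + by move=> i _; rewrite mxE.
    + by move=> i hi; rewrite mxE /pw /b hi.
  - by move=> i j; rewrite !mxE Ts.
  - by move=> i j h; rewrite mxE Tz // powR0.
split.
  move=> [_ Hp]; split => // x; rewrite QH.
  apply: psd_pow => // X; rewrite QX; exact: Hp.
move=> [_ Hp]; split => // x hx; rewrite QH.
apply: pd_pow => //.
  move=> X [i [hi Xi]]; rewrite QX; apply: Hp.
  apply/eqP => h0; move: Xi; have := congr1 (fun M : 'rV_m.+1 => M 0 (inord i)) h0.
  by rewrite /= !mxE inordK // => ->; rewrite eqxx.
have [j hj] := @rv_nz R _ x hx.
by exists j; split; [rewrite -ltnS | rewrite inord_val].
Qed.

Definition tt (R : realType) (g : R) (i j : nat) : R :=
  if i == j then 1 else
  if [&& (i.+1 == j) || (j.+1 == i), (i < 3)%N & (j < 3)%N] then g else 0.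
Arguments tt {R}.
Definition Tb (R : realType) m (g : R) : 'M[R]_m.+3 := \matrix_(i, j) tt g i j.
Arguments Tb {R}.

Lemma tt_sym (R : realType) (g : R) i j : tt g i j = tt g j i.
Proof. by rewrite /tt eq_sym orbC; case: (_ || _) => //=; rewrite andbC. Qed.

Lemma tt_z (R : realType) (g : R) (i j : nat) : (i.+1 < j)%N \/ (j.+1 < i)%N -> tt g i j = 0.
Proof.
move=> h; rewrite /tt.
have -> : (i == j) = false by case: h => h; apply/negbTE; rewrite neq_ltn; [rewrite (ltn_trans (ltnSn i) h) | rewrite (ltn_trans (ltnSn j) h) orbT].
have -> : (i.+1 == j) = false by case: h => h; apply/negbTE; rewrite neq_ltn; [rewrite h | rewrite ltnS (ltnW (ltn_trans (ltnSn _) h)) orbT].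
have -> : (j.+1 == i) = false by case: h => h; apply/negbTE; rewrite neq_ltn; [rewrite ltnS (ltnW (ltn_trans (ltnSn _) h)) orbT | rewrite h].
by [].
Qed.

Lemma Tb_tri (R : realType) m (g : R) : 0 <= g -> nonneg_tridiag (Tb m g).
Proof.
move=> g0; split; first by move=> i j; rewrite !mxE tt_sym.
split; first by move=> i; rewrite mxE /tt eqxx.
split; first by move=> i j _; rewrite mxE /tt; case: ifP => _ //; case: ifP.
by move=> i j h; rewrite mxE tt_z.
Qed.

Lemma Tb_pow (R : realType) m (g r : R) : 0 < r -> hadamard_pow r (Tb m g) = Tb m (g `^ r).
Proof.
move=> r0; apply/matrixP => i j; rewrite !mxE /tt.
case: ifP => _; first by rewrite powR1.
by case: ifP => _ //; rewrite powR0 // gt_eqF.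
Qed.

Lemma Tb_q (R : realType) m (g : R) (x : 'rV[R]_m.+3) :
  let X := fun i => x 0 (inord i) in
  qform (Tb m g) x = \sum_(0 <= i < m.+3) X i ^+ 2 + 2 * (g * (X 0%N * X 1%N + X 1%N * X 2%N)).
Proof.
move=> X; rewrite qform_tri; last 2 first.
- by move=> i j; rewrite !mxE tt_sym.
- by move=> i j h; rewrite mxE tt_z.
rewrite Qf_Qs /Qs; congr (_ + 2 * _).
  by apply: eq_bigr => i _; rewrite mxE /tt eqxx mul1r.
rewrite big_nat_recl // big_nat_recl // big_nat_cond big1; last first.
  move=> i /andP[/andP[_ hi] _]; rewrite mxE !inordK //; last by rewrite !ltnS ltnW.
  have h3 : (i.+3 < 3)%N = false by []. 
  by rewrite /tt (ltn_eqF (ltnSn _)) h3 !andbF !mul0r.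
rewrite !mxE !inordK //= /tt /= /X; ring.
Qed.

Lemma three_ineq (R : realType) (g x0 x1 x2 S' : R) : 0 <= g -> 2 * g ^+ 2 < 1 -> 0 <= S' ->
  0 < x0 ^+ 2 + x1 ^+ 2 + x2 ^+ 2 + S' ->
  0 < x0 ^+ 2 + x1 ^+ 2 + x2 ^+ 2 + S' + 2 * (g * (x0 * x1 + x1 * x2)).
Proof.
move=> g0 g1 S0 Sp.
set a := (1 + 2 * g ^+ 2) / 2.
set S3 := x0 ^+ 2 + x1 ^+ 2 + x2 ^+ 2.
have ap : 0 < a by rewrite /a; apply: divr_gt0 => //; nra.
have a2 : 0 <= a ^+ 2 - 2 * g ^+ 2.
  have -> : a ^+ 2 - 2 * g ^+ 2 = ((1 - 2 * g ^+ 2) / 2) ^+ 2 by rewrite /a; field.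
  exact: sqr_ge0.
have id : a * (a * S3 + 2 * (g * (x0 * x1 + x1 * x2))) =
   (a * x1 + g * (x0 + x2)) ^+ 2 + (a ^+ 2 - 2 * g ^+ 2) * (x0 ^+ 2 + x2 ^+ 2)
   + g ^+ 2 * (x0 - x2) ^+ 2 by rewrite /S3; ring.
have h1 : 0 <= a * S3 + 2 * (g * (x0 * x1 + x1 * x2)).
  rewrite -(pmulr_rge0 _ ap) id.
  apply: addr_ge0; first apply: addr_ge0.
  - exact: sqr_ge0.
  - exact: mulr_ge0 a2 (addr_ge0 (sqr_ge0 _) (sqr_ge0 _)).
  - exact: mulr_ge0 (sqr_ge0 _) (sqr_ge0 _).
have a1 : 0 < 1 - a by rewrite /a; lra.
have a1' : 1 - a <= 1 by lra.
have S30 : 0 <= S3 by rewrite /S3 !addr_ge0 ?sqr_ge0.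
have hp := mulr_gt0 a1 Sp.
have hq : (1 - a) * S' <= S' by rewrite ler_piMl.
rewrite -/S3 in Sp hp *.
have -> : S3 + S' + 2 * (g * (x0 * x1 + x1 * x2)) =
   (a * S3 + 2 * (g * (x0 * x1 + x1 * x2))) + (1 - a) * (S3 + S') + (S' - (1 - a) * S') by ring.
lra.
Qed.

Lemma Tb_pd (R : realType) m (g : R) : 0 <= g -> 2 * g ^+ 2 < 1 -> posdef (Tb m g).
Proof.
move=> g0 g1; split; first by apply/matrixP => i j; rewrite !mxE tt_sym.
move=> x hx; rewrite Tb_q /=.
set X := fun i => x 0 (inord i).
have Sp : 0 < \sum_(0 <= i < m.+3) X i ^+ 2.
  have [j hj] := @rv_nz R _ x hx.
  rewrite big_mkord (bigD1 j) //= /X inord_val.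
  have h1 : 0 < x 0 j ^+ 2 by rewrite lt_def sqrf_eq0 hj sqr_ge0.
  have h2 : 0 <= \sum_(i < m.+3 | i != j) x 0 (inord i) ^+ 2.
    by apply: sumr_ge0 => i _; exact: sqr_ge0.
  lra.
move: Sp; rewrite big_nat_recl // big_nat_recl // big_nat_recl // !addrA => Sp.
apply: three_ineq => //.
by apply: sumr_ge0 => i _; exact: sqr_ge0.
Qed.

Lemma Tb_neg (R : realType) m (g : R) : 1 < 2 * g ^+ 2 -> exists x, qform (Tb m g) x < 0.
Proof.
move=> g1.
exists (\row_(j < m.+3) (if val j == 0%N then g else if val j == 1%N then -1 else if val j == 2%N then g else 0)).
rewrite Tb_q /= big_nat_recl // big_nat_recl // big_nat_recl // big_nat_cond big1; last first.
  move=> i /andP[/andP[_ hi] _]; rewrite mxE inordK; last exact: hi.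
  by rewrite /= expr0n.
rewrite !mxE !inordK //=.
lra.
Qed.

Theorem theorem1p2 (R : realType) (n : nat) (r : R) :
  (3 <= n)%N -> 0 < r ->
  ((forall T : 'M[R]_n, nonneg_tridiag T -> posdef T -> posdef (hadamard_pow r T))
     <-> 1 <= r) /\
  ((forall T : 'M[R]_n, nonneg_tridiag T -> possemidef T ->
       possemidef (hadamard_pow r T))
     <-> 1 <= r).
Proof.
case: n => [|[|[|m]]] // _ r0.
have q0 : forall (T : 'M[R]_m.+3), qform T 0 = 0.
  by move=> T; rewrite /qform !mul0mx mxE.
have cex : r < 1 -> exists T : 'M[R]_m.+3,
    [/\ nonneg_tridiag T, posdef T & exists x, qform (hadamard_pow r T) x < 0].
  move=> r1; have [g [g0 [g1 g2]]] := @cex_beta R r r0 r1.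
  exists (Tb m g); split; first exact: Tb_tri.
  - exact: Tb_pd.
  - by rewrite Tb_pow //; apply: Tb_neg.
have pd_psd : forall (T : 'M[R]_m.+3), posdef T -> possemidef T.
  move=> T [Ts Tp]; split => // x.
  have [->|xn] := eqVneq x 0; first by rewrite q0.
  exact: ltW (Tp x xn).
split; split.
- move=> H; case: (lerP 1 r) => // r1; exfalso.
  have [T [Tt Tp [x hx]]] := cex r1.
  have [_ Hp] := H T Tt Tp.
  have xn0 : x != 0 by apply/eqP => x0; move: hx; rewrite x0 q0 ltxx.
  by have := Hp x xn0; move/(lt_trans hx); rewrite ltxx.
- by move=> r1 T Tt Tp; exact: (@suff_both R r _ T r1 Tt).2 Tp.
- move=> H; case: (lerP 1 r) => // r1; exfalso.
  have [T [Tt Tp [x hx]]] := cex r1.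
  have [_ Hp] := H T Tt (pd_psd T Tp).
  by have := Hp x; rewrite leNgt hx.
- by move=> r1 T Tt Tp; exact: (@suff_both R r _ T r1 Tt).1 Tp.
Qed.
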